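(* Let $S\subseteq\mathbb{R}^2$ be the set of all pairs $(c_3,c_4)$ such that there is a sequence of tournaments $(T_n)$ with $|T_n|\to\infty$ for which $c_3=\lim_n\mathbf{pr}(C_3,T_n)$ and $c_4=\lim_n\mathbf{pr}(C_4,T_n)$ (both limits existing). Then $S$ is simply connected.
   Context: For tournaments $T,H$, $\mathbf{pr}(H,T)$ denotes the probability that a uniformly random set of $|H|$ vertices of $T$ spans a subtournament isomorphic to $H$. $C_3$ is the cyclically oriented triangle and $C_4$ is the $4$-vertex tournament (unique up to isomorphism) containing a directed Hamiltonian $4$-cycle. *)

(* Defs.v *)
From HB Require Import structures.
From mathcomp Require Import all_boot all_order all_algebra.
From mathcomp Require Import all_classical all_reals all_analysis.
Set Implicit Arguments. Unset Strict Implicit. Unset Printing Implicit Defensive.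
Import Order.TTheory GRing.Theory Num.Theory.
Import numFieldNormedType.Exports.
Local Open Scope classical_set_scope.
Local Open Scope ring_scope.

Definition is_tournament (n : nat) (T : rel 'I_n) : Prop :=
  (forall x, ~~ T x x) /\
  (forall x y, x != y -> (T x y || T y x) && ~~ (T x y && T y x)).

Definition spans_copy (k n : nat) (H : rel 'I_k) (T : rel 'I_n)
    (A : {set 'I_n}) : Prop :=
  exists f : 'I_k -> 'I_n,
    [/\ injective f, f @: setT = A & forall i j, H i j = T (f i) (f j)].

Definition pr (R : realType) (k n : nat) (H : rel 'I_k) (T : rel 'I_n) : R :=
  (#|[set A : {set 'I_n} | (#|A| == k) && `[< spans_copy H T A >]]%SET|%:R)
    / ('C(n, k))%:R.

Definition C3 : rel 'I_3 := fun i j => (j == (i.+1 %% 3)%N :> nat).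

(* C4: the 4-vertex tournament with Hamiltonian cycle 0->1->2->3->0 and
   diagonals 0 -> 2, 1 -> 3. *)
Definition C4 : rel 'I_4 := fun i j =>
  (j == (i.+1 %% 4)%N :> nat) || ((i < 2)%N && (j == (i + 2)%N :> nat)).

Definition limit_set (R : realType) : set (R * R) :=
  [set c | exists (N : nat -> nat) (T : forall m, rel 'I_(N m)),
     [/\ (forall m, is_tournament (T m)),
         (forall B : nat, exists M : nat, forall m, (M <= m)%N -> (B <= N m)%N),
         (fun m => pr R C3 (T m)) @ \oo --> c.1 &
         (fun m => pr R C4 (T m)) @ \oo --> c.2]].

Definition unit_I (R : realType) : set R := `[0, 1]%classic.
Arguments unit_I R : clear implicits.

Definition path_in (R : realType) (S : set (R * R)) (g : R -> R * R) : Prop :=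
  {within unit_I R, continuous g} /\ (forall t, unit_I R t -> S (g t)).

Definition simply_connected (R : realType) (S : set (R * R)) : Prop :=
  [/\ S !=set0,
      (forall x y, S x -> S y ->
         exists g, [/\ path_in S g, g 0 = x & g 1 = y]) &
      (forall g, path_in S g -> g 0 = g 1 ->
         exists Hm : R * R -> R * R,
           [/\ {within unit_I R `*` unit_I R, continuous Hm},
               (forall p, (unit_I R `*` unit_I R) p -> S (Hm p)),
               (forall t, unit_I R t -> Hm (t, 0) = g t),
               (forall t, unit_I R t -> Hm (t, 1) = g 0) &
               (forall s, unit_I R s -> Hm (0, s) = g 0 /\ Hm (1, s) = g 0)])].
Arguments limit_set R : clear implicits.

(* Main.v *)
Require Import Defs.
From HB Require Import structures.
From mathcomp Require Import all_boot all_order all_algebra.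
From mathcomp Require Import all_classical all_reals all_analysis.
From mathcomp Require Import ring lra.
Set Implicit Arguments. Unset Strict Implicit. Unset Printing Implicit Defensive.
Import Order.TTheory GRing.Theory Num.Theory.
Import numFieldNormedType.Exports.
Local Open Scope classical_set_scope.
Local Open Scope ring_scope.

Lemma C3_out (i : 'I_3) : exists j, C3 i j.
Proof.
case: i => -[|[|[|n]]] Hi //.
- by exists (@Ordinal 3 1 isT).
- by exists (@Ordinal 3 2 isT).
- by exists (@Ordinal 3 0 isT).
Qed.
Lemma C4_out (i : 'I_4) : exists j, C4 i j.
Proof.
case: i => -[|[|[|[|n]]]] Hi //.
- by exists (@Ordinal 4 1 isT).
- by exists (@Ordinal 4 2 isT).
- by exists (@Ordinal 4 3 isT).
- by exists (@Ordinal 4 0 isT).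
Qed.
Lemma C3_irr (i : 'I_3) : ~~ C3 i i.
Proof. by case: i => -[|[|[|n]]] Hi. Qed.
Lemma C4_irr (i : 'I_4) : ~~ C4 i i.
Proof. by case: i => -[|[|[|[|n]]]] Hi. Qed.

Section Ext.
Variables (k N L : nat) (H : rel 'I_k) (T : rel 'I_N).
Hypothesis Hout : forall i, exists j, H i j.
Hypothesis Hirr : forall i, ~~ H i i.
Hypothesis Ttour : is_tournament T.

Definition ext : rel 'I_(N + L) := fun x y =>
  match fintype.split x, fintype.split y with
  | inl a, inl b => T a b
  | _, _ => (x < y)%N
  end.

Lemma ext_lshift a b : ext (lshift L a) (lshift L b) = T a b.
Proof.
by rewrite /ext -[lshift L a]/(unsplit (inl a)) -[lshift L b]/(unsplit (inl b)) !unsplitK.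
Qed.

Lemma ext_tour : is_tournament ext.
Proof.
case: Ttour => Tirr Ttot; split.
  by move=> x; rewrite /ext; case: (fintype.split x) => a; [exact: Tirr | rewrite ltnn].
move=> x y xy; rewrite /ext.
case ex: (fintype.split x) => [a|a]; case ey: (fintype.split y) => [b|b].
- apply: Ttot; apply: contra xy => /eqP ab.
  by rewrite -(splitK x) -(splitK y) ex ey ab.
all: case: ltngtP => //= h; by move: xy; rewrite -val_eqE /= h eqxx.
Qed.

Lemma no_sink n (T' : rel 'I_n) (A : {set 'I_n}) z : is_tournament T' -> z \in A ->
  (forall y, y \in A -> y != z -> T' y z) -> ~ spans_copy H T' A.
Proof.
move=> [_ Ttot] zA zsink [f [finj fim fH]].
have : z \in f @: setT by rewrite fim.
case/imsetP => i _ zi.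
have [j Hij] := Hout i.
have ji : j != i by apply/eqP => e; move: (Hirr i); rewrite -{2}e Hij.
have fjA : f j \in A by rewrite -fim; apply: imset_f; rewrite inE.
have fji : f j != f i by rewrite (inj_eq finj).
have h1 : T' (f j) (f i) by rewrite -zi; apply: zsink => //; rewrite zi.
have h2 : T' (f i) (f j) by rewrite -fH.
by move: (Ttot _ _ fji); rewrite h1 h2 /= => -[].
Qed.

Lemma ext_left A : spans_copy H ext A -> forall x, x \in A -> (x < N)%N.
Proof.
move=> sp x xA; rewrite ltnNge; apply/negP => Nx.
have [z zA zmax] := @arg_maxnP _ x (mem A) (fun y => nat_of_ord y) xA.
apply: (no_sink ext_tour zA _ sp) => y yA yz.
have yzlt : (y < z)%N.
  by rewrite ltn_neqAle; apply/andP; split; [rewrite val_eqE | exact: zmax].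
have Nz : (N <= z)%N := leq_trans Nx (zmax _ xA).
rewrite /ext; case: (@split_ordP N L z) => c ez.
  by move: Nz; rewrite ez /= leqNgt ltn_ord.
by case: (fintype.split y).
Qed.

Lemma spans_fwd (A : {set 'I_N}) : spans_copy H T A -> spans_copy H ext (lshift L @: A).
Proof.
move=> [f [finj fim fH]]; exists (fun i => lshift L (f i)); split.
- by move=> i j /lshift_inj /finj.
- by rewrite -fim -imset_comp.
- by move=> i j; rewrite ext_lshift.
Qed.

Hypothesis k0 : (0 < k)%N.

Lemma spans_bwd (A : {set 'I_N}) : spans_copy H ext (lshift L @: A) -> spans_copy H T A.
Proof.
move=> [f [finj fim fH]].
have : f (Ordinal k0) \in lshift L @: A by rewrite -fim; apply: imset_f; rewrite inE.
case/imsetP => a0 _ _.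
pose f' i := odflt a0 [pick a | lshift L a == f i].
have ef i : lshift L (f' i) = f i.
  rewrite /f'; case: pickP => [a /eqP //|none].
  have : f i \in lshift L @: A by rewrite -fim; apply: imset_f; rewrite inE.
  by case/imsetP => b _ eb; move: (none b); rewrite eb eqxx.
exists f'; split.
- by move=> i j eij; apply: finj; rewrite -!ef eij.
- apply: (imset_inj (@lshift_inj N L)); rewrite -fim -imset_comp.
  by apply: eq_imset => i /=; rewrite ef.
- by move=> i j; rewrite fH -!ef ext_lshift.
Qed.

Definition cset n (T' : rel 'I_n) :=
  [set A : {set 'I_n} | (#|A| == k) && `[< spans_copy H T' A >]]%SET.

Lemma cset_ext : cset ext = (fun A : {set 'I_N} => lshift L @: A) @: cset T.
Proof.
apply/setP => B; rewrite inE; apply/idP/imsetP.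
- move=> /andP[cB /asboolP sB].
  have eB : B = lshift L @: (lshift L @^-1: B).
    apply/setP => x; apply/idP/imsetP.
      move=> xB; have xN := ext_left sB xB.
      have e : lshift L (Ordinal xN) = x by apply: val_inj.
      by exists (Ordinal xN); rewrite ?inE e.
    by case=> a; rewrite inE => aB ->.
  exists (lshift L @^-1: B) => //.
  rewrite inE; apply/andP; split.
    by rewrite -(card_imset _ (@lshift_inj N L)) -eB.
  apply/asboolP; apply: spans_bwd; by rewrite -eB.
- case=> A; rewrite inE => /andP[cA /asboolP sA] ->.
  apply/andP; split; first by rewrite card_imset //; exact: lshift_inj.
  by apply/asboolP; apply: spans_fwd.
Qed.

Lemma card_cset_ext : #|cset ext| = #|cset T|.
Proof. by rewrite cset_ext card_imset //; apply: imset_inj; exact: lshift_inj. Qed.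

Lemma cset_le n (T' : rel 'I_n) : (#|cset T'| <= 'C(n, k))%N.
Proof.
have <- : #|[set A : {set 'I_n} | #|A| == k]%SET| = 'C(n, k) by rewrite card_draws card_ord.
apply: subset_leq_card.
by apply/fintype.subsetP => A; rewrite !inE => /andP[].
Qed.

Lemma pr_ext (R : realType) :
  pr R H ext = pr R H T * (('C(N, k))%:R / ('C(N + L, k))%:R).
Proof.
rewrite /pr -/(cset ext) -/(cset T) card_cset_ext.
case: (eqVneq ('C(N, k)) 0%N) => h.
  have : (#|cset T| <= 0)%N by rewrite -h cset_le.
  by rewrite leqn0 => /eqP ->; rewrite h !mul0r.
by rewrite mulrA divfK // pnatr_eq0.
Qed.
End Ext.
Section Lim.
Variable R : realType.
Definition tends (u : nat -> nat) := forall B, exists M, forall m, (M <= m)%N -> (B <= u m)%N.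

Lemma inv_cvg0 u : tends u -> (fun m => ((u m)%:R : R)^-1) @ \oo --> 0.
Proof.
move=> tu; apply/cvgrPdist_lt => e e0.
have [M hM] := tu (Num.bound e^-1).+1.
exists M => // m /= /hM hm.
have u0 : (0 : R) < (u m)%:R by rewrite ltr0n; apply: leq_trans hm.
rewrite sub0r normrN ger0_norm ?invr_ge0 ?ler0n // invf_plt //.
apply: lt_le_trans (archi_boundP _) _; first by rewrite invr_ge0 ltW.
rewrite ler_nat; exact: ltnW.
Qed.

Lemma cvg_abs_bound (x y : nat -> R) a : y @ \oo --> 0 ->
  (\forall m \near \oo, `|x m - a| <= y m) -> x @ \oo --> a.
Proof.
move=> y0 hb; apply/cvgrPdist_lt => e e0.
move/cvgrPdist_lt: y0 => /(_ e e0) Y.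
near=> m.
have h1 : `|x m - a| <= y m by near: m.
have h2 : `|0 - y m| < e by near: m.
rewrite distrC; apply: le_lt_trans h1 _.
by apply: le_lt_trans h2; rewrite sub0r normrN ler_norm.
Unshelve. all: by end_near.
Qed.

Lemma binS_real n k : ('C(n, k.+1))%:R = (n%:R * ('C(n.-1, k))%:R / (k.+1)%:R : R).
Proof.
have := mul_bin_diag n k => /(congr1 (fun x => x%:R : R)).
rewrite !natrM => ->; by rewrite mulrC mulKf // pnatr_eq0.
Qed.

Lemma ratio_split (p q r s c : R) : c != 0 -> (p * q / c) / (r * s / c) = (p / r) * (q / s).
Proof. by move=> c0; rewrite invf_div [LHS]mulrA divfK // mulf_div. Qed.

Lemma real_bound (p q : R) : 1 <= p -> p <= q -> 2 <= q ->
  `|(p - 1) / (q - 1) - p / q - 0| <= (q - 1)^-1.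
Proof.
move=> p1 pq q2.
have q0 : q != 0 by apply/negP => /eqP q0; lra.
have q10 : q - 1 != 0 by apply/negP => /eqP q0'; lra.
have e : (p - 1) / (q - 1) - p / q - 0 = - ((q - p) / (q * (q - 1))).
  by field; rewrite q0 q10.
rewrite e normrN ger0_norm; last by apply: divr_ge0; nra.
rewrite -subr_ge0.
have -> : (q - 1)^-1 - (q - p) / (q * (q - 1)) = p / (q * (q - 1)).
  by field; rewrite q0 q10.
apply: divr_ge0; nra.
Qed.

Lemma tends_pred u : tends u -> tends (fun m => (u m).-1).
Proof.
move=> tu B; have [M hM] := tu B.+1; exists M => m /hM.
by move=> h; rewrite -ltnS (ltn_predK h).
Qed.

Lemma ratio_cvg k : forall (u v : nat -> nat) (a : R), tends u -> (forall m, u m <= v m)%N ->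
  (fun m => (u m)%:R / (v m)%:R : R) @ \oo --> a ->
  (fun m => ('C(u m, k))%:R / ('C(v m, k))%:R : R) @ \oo --> a ^+ k.
Proof.
elim: k => [|k IH] u v a tu uv W.
  under eq_fun do rewrite !bin0 divr1.
  by rewrite expr0; exact: cvg_cst.
have e : (fun m => ('C(u m, k.+1))%:R / ('C(v m, k.+1))%:R : R) =
   (fun m => ((u m)%:R / (v m)%:R) * (('C((u m).-1, k))%:R / ('C((v m).-1, k))%:R)).
  apply: funext => m; rewrite !binS_real ratio_split //.
rewrite e exprSr mulrC; apply: cvgM => //.
apply: IH; first exact: tends_pred.
  by move=> m; rewrite -!subn1 leq_sub2r.
set x := fun m => ((u m).-1)%:R / ((v m).-1)%:R : R.
set w := fun m => (u m)%:R / (v m)%:R : R.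
have D : (fun m => x m - w m) @ \oo --> 0.
  apply: (@cvg_abs_bound _ (fun m => (((v m).-1)%:R : R)^-1)).
    apply: inv_cvg0; apply: tends_pred => B.
    have [M hM] := tu B; exists M => m /hM hm; exact: leq_trans hm (uv m).
  have [M hM] := tu 2%N; exists M => // m /= /hM hm.
  have hv : (2 <= v m)%N := leq_trans hm (uv m).
  have hu1 : (1 <= u m)%N by apply: leq_trans hm.
  have hv1 : (1 <= v m)%N by apply: leq_trans hv.
  rewrite /x /w -!subn1 (natrB _ hu1) (natrB _ hv1).
  apply: real_bound.
  - by rewrite (ler_nat R 1); exact: leq_trans hm.
  - by rewrite ler_nat.
  - by rewrite (ler_nat R 2).
have -> : x = fun m => w m + (x m - w m) by apply: funext => m; rewrite addrC subrK.
by rewrite -[a]addr0; apply: cvgD.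
Qed.
End Lim.

Section Assembly.
Variable R : realType.

Lemma T0tour : is_tournament (fun _ _ : 'I_0 => false).
Proof. by split => -[]. Qed.

Lemma tendsP (N : nat -> nat) : (forall B : nat, exists M : nat, forall m, (M <= m)%N -> (B <= N m)%N) -> tends N.
Proof. by []. Qed.

Lemma pr0_C3 m : pr R C3 (@ext 0 m (fun _ _ => false)) = 0.
Proof. by rewrite (pr_ext m C3_out C3_irr T0tour isT R) /pr bin0n /= invr0 !mulr0 !mul0r. Qed.
Lemma pr0_C4 m : pr R C4 (@ext 0 m (fun _ _ => false)) = 0.
Proof. by rewrite (pr_ext m C4_out C4_irr T0tour isT R) /pr bin0n /= invr0 !mulr0 !mul0r. Qed.

Lemma S_origin : limit_set R (0, 0).
Proof.
exists (fun m => (0 + m)%N), (fun m => @ext 0 m (fun _ _ => false)); split.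
- move=> m; apply: ext_tour; exact: T0tour.
- by move=> B; exists B.
- under eq_fun do rewrite pr0_C3; exact: cvg_cst.
- under eq_fun do rewrite pr0_C4; exact: cvg_cst.
Qed.

Lemma ratio_bound (a n l : R) : 0 < a -> a <= 1 -> 0 < n + l -> 0 <= l ->
  l <= n * ((1 - a) / a) -> n * ((1 - a) / a) < l + 1 ->
  `|n / (n + l) - a| <= (n + l)^-1.
Proof.
move=> a0 a1 nl0 l0 h1 h2.
have an0 : a != 0 by rewrite gt_eqF.
have nln0 : n + l != 0 by rewrite gt_eqF.
have e1 : n / (n + l) - a = (a * (n * ((1 - a) / a) - l)) / (n + l).
  by field; rewrite an0 nln0.
rewrite e1 ger0_norm; last by apply: divr_ge0; nra.
rewrite -subr_ge0.
have -> : (n + l)^-1 - a * (n * ((1 - a) / a) - l) / (n + l) =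
          (1 - a * (n * ((1 - a) / a) - l)) / (n + l).
  by field; rewrite an0 nln0.
apply: divr_ge0; nra.
Qed.

Lemma SPhi a p : 0 <= a -> a <= 1 -> limit_set R p ->
  limit_set R (a ^+ 3 * p.1, a ^+ 4 * p.2).
Proof.
move=> a0 a1 [N [T [Ttour hN c3 c4]]].
case: (eqVneq a 0) => [->| an0].
  by rewrite !expr0n /= !mul0r; exact: S_origin.
have ap : 0 < a by rewrite lt_def an0.
pose b := (1 - a) / a.
have b0 : 0 <= b by rewrite /b divr_ge0 // subr_ge0.
pose L m := Num.truncn ((N m)%:R * b).
have hL m : (L m)%:R <= (N m)%:R * b < (L m).+1%:R.
  by apply: truncn_itv; rewrite mulr_ge0.
have tN : tends N := hN.
have tN' : tends (fun m => N m + L m)%N.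
  move=> B; have [M hM] := hN B; exists M => m /hM h; exact: leq_trans h (leq_addr _ _).
have W : (fun m => (N m)%:R / (N m + L m)%:R : R) @ \oo --> a.
  apply: (@cvg_abs_bound _ _ (fun m => ((N m + L m)%:R : R)^-1)).
    exact: inv_cvg0.
  have [M hM] := hN 1%N; exists M => // m /= /hM hm.
  have [h1 h2] := andP (hL m).
  rewrite natrD; apply: ratio_bound => //.
  - by rewrite -natrD ltr0n; apply: leq_trans hm (leq_addr _ _).
  - by move: h2; rewrite -addn1 natrD.
exists (fun m => N m + L m)%N, (fun m => @ext (N m) (L m) (T m)); split.
- by move=> m; apply: ext_tour.
- exact: tN'.
- under eq_fun do rewrite (pr_ext _ C3_out C3_irr (Ttour _) isT R).
  rewrite /= mulrC; apply: cvgM => //.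
  exact: (@ratio_cvg R 3 N (fun m => N m + L m)%N a tN (fun m => leq_addr _ _) W).
- under eq_fun do rewrite (pr_ext _ C4_out C4_irr (Ttour _) isT R).
  rewrite /= mulrC; apply: cvgM => //.
  exact: (@ratio_cvg R 4 N (fun m => N m + L m)%N a tN (fun m => leq_addr _ _) W).
Qed.
End Assembly.

Section Topo.
Variable R : realType.

Definition clamp (x : R) : R := Num.max 0 (Num.min x 1).

Section Comb.
Variable T : topologicalType.
Lemma cadd (f g : T -> R) : continuous f -> continuous g -> continuous (fun p => f p + g p).
Proof. move=> cf cg p; apply: cvgD; [exact: cf|exact: cg]. Qed.
Lemma cmul (f g : T -> R) : continuous f -> continuous g -> continuous (fun p => f p * g p).
Proof. move=> cf cg p; apply: cvgM; [exact: cf|exact: cg]. Qed.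
Lemma ccst (c : R) : continuous (fun _ : T => c).
Proof. move=> p; exact: cvg_cst. Qed.
Lemma cmax (f g : T -> R) : continuous f -> continuous g -> continuous (fun p => Num.max (f p) (g p)).
Proof. move=> cf cg p; apply: continuous_max; [exact: cf|exact: cg]. Qed.
Lemma cmin (f g : T -> R) : continuous f -> continuous g -> continuous (fun p => Num.min (f p) (g p)).
Proof. move=> cf cg p; apply: continuous_min; [exact: cf|exact: cg]. Qed.
Lemma cabs (f : T -> R) : continuous f -> continuous (fun p => `|f p|).
Proof. move=> cf p; apply: cvg_norm; exact: cf. Qed.
Lemma cneg (f : T -> R) : continuous f -> continuous (fun p => - f p).
Proof. move=> cf p; apply: cvgN; exact: cf. Qed.
Lemma cpair (f g : T -> R) : continuous f -> continuous g -> continuous (fun p => (f p, g p)).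
Proof. move=> cf cg p; exact: (cvg_pair (cf p) (cg p)). Qed.
Lemma cexp (f : T -> R) n : continuous f -> continuous (fun p => f p ^+ n).
Proof.
move=> cf; elim: n => [|n IH]; first by under eq_fun do rewrite expr0; exact: ccst.
by under eq_fun do rewrite exprS; exact: cmul.
Qed.
Lemma cfst : continuous (@fst R R).
Proof. move=> p; exact: cvg_fst. Qed.
Lemma csnd : continuous (@snd R R).
Proof. move=> p; exact: cvg_snd. Qed.
End Comb.

Lemma ccomp {X Y Z : topologicalType} (f : X -> Y) (h : Y -> Z) :
  continuous f -> continuous h -> continuous (fun x => h (f x)).
Proof. move=> cf ch x; apply: continuous_comp; [exact: cf|exact: ch]. Qed.

Lemma cid : continuous (fun x : R => x).
Proof. move=> x; exact: cvg_id. Qed.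

Lemma clamp_cont : continuous clamp.
Proof.
apply: cmax; first exact: ccst.
apply: cmin; [exact: cid| exact: ccst].
Qed.

Lemma clamp_in x : unit_I R (clamp x).
Proof.
rewrite /unit_I /clamp /= in_itv /= le_max lexx /= ge_max ler01 /= ge_min lexx orbT.
done.
Qed.

Lemma clamp_le0 z : z <= 0 -> clamp z = 0.
Proof. by move=> h; rewrite /clamp max_l // ge_min h. Qed.
Lemma clamp_ge1 z : 1 <= z -> clamp z = 1.
Proof. by move=> h; rewrite /clamp min_r // max_r. Qed.
Lemma clamp_id z : 0 <= z -> z <= 1 -> clamp z = z.
Proof. by move=> h1 h2; rewrite /clamp min_l // max_r. Qed.

Lemma unit_IP t : unit_I R t <-> 0 <= t <= 1.
Proof. by rewrite /unit_I /= in_itv. Qed.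

Lemma G_cont (g : R -> R * R) : {within unit_I R, continuous g} ->
  continuous (g \o clamp).
Proof.
move=> gc x.
have := gc (clamp x).
rewrite /continuous_at => H W Wn.
have E := nbhs_subspace_in (clamp_in x).
have : within (unit_I R) (nbhs (clamp x)) (g @^-1` W).
  rewrite E; exact: (H W Wn).
rewrite /within /= => V.
have K := clamp_cont V.
exact: (filterS (fun y (h : unit_I R (clamp y) -> W (g (clamp y))) => h (clamp_in y)) K).
Qed.

Variable S : set (R * R).
Hypothesis S0 : S (0, 0).
Hypothesis SPhi : forall a p, 0 <= a -> a <= 1 -> S p -> S (a ^+ 3 * p.1, a ^+ 4 * p.2).

Definition pth (x y : R * R) (t : R) : R * R :=
  (Num.max (1 - 2 * t) 0 ^+ 3 * x.1 + Num.max (2 * t - 1) 0 ^+ 3 * y.1,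
   Num.max (1 - 2 * t) 0 ^+ 4 * x.2 + Num.max (2 * t - 1) 0 ^+ 4 * y.2).

Lemma pth_cont x y : continuous (pth x y).
Proof.
have c1 : continuous (fun t : R => Num.max (1 - 2 * t) 0).
  apply: cmax; last exact: ccst; apply: cadd; first exact: ccst.
  apply: cneg; apply: cmul; [exact: ccst|exact: cid].
have c2 : continuous (fun t : R => Num.max (2 * t - 1) 0).
  apply: cmax; last exact: ccst; apply: cadd; last exact: ccst.
  apply: cmul; [exact: ccst|exact: cid].
by apply: cpair; apply: cadd; apply: cmul; try exact: ccst; apply: cexp.
Qed.


Lemma pth_in x y t : S x -> S y -> unit_I R t -> S (pth x y t).
Proof.
move=> Sx Sy /unit_IP/andP[t0 t1]; rewrite /pth.
case: (leP t (1/2)) => ht.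
- have -> : Num.max (2 * t - 1) 0 = 0 by apply: max_r; lra.
  have -> : Num.max (1 - 2 * t) 0 = 1 - 2 * t by apply: max_l; lra.
  rewrite !expr0n /= !mul0r !addr0; apply: SPhi => //; lra.
- have -> : Num.max (1 - 2 * t) 0 = 0 by apply: max_r; lra.
  have -> : Num.max (2 * t - 1) 0 = 2 * t - 1 by apply: max_l; lra.
  rewrite !expr0n /= !mul0r !add0r; apply: SPhi => //; lra.
Qed.

Lemma pth0 x y : pth x y 0 = x.
Proof.
rewrite /pth mulr0 subr0 sub0r (@max_l _ _ 1 0) ?ler01 // (@max_r _ _ (-1) 0) ?lerN10 //.
by rewrite !expr1n !expr0n /= !mul1r !mul0r !addr0; case: x.
Qed.

Lemma pth1 x y : pth x y 1 = y.
Proof.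
rewrite /pth mulr1.
have -> : (1 - 2 : R) = -1 by lra.
have -> : (2 - 1 : R) = 1 by lra.
rewrite (@max_l _ _ 1 0) ?ler01 // (@max_r _ _ (-1) 0) ?lerN10 //.
by rewrite !expr1n !expr0n /= !mul1r !mul0r !add0r; case: y.
Qed.

Section Hom.
Variable g : R -> R * R.
Let x0 := g 0.
Let G := g \o clamp.
Definition dd (p : R * R) := Num.min p.1 (1 - p.1).
Definition zz (p : R * R) := 1/2 + (p.1 - 1/2) * (1 + 4 * Num.min p.2 (1/2)).
Definition lam (p : R * R) := Num.max (1 - 3 * dd p) `|1 - 2 * p.2|.
Definition mu (p : R * R) := Num.max (Num.max (1 - 3 * dd p) (1 - 2 * p.2)) 0.
Definition HH (p : R * R) : R * R :=
  (mu p ^+ 3 * ((G (zz p)).1 - x0.1) + lam p ^+ 3 * x0.1,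
   mu p ^+ 4 * ((G (zz p)).2 - x0.2) + lam p ^+ 4 * x0.2).

Hypothesis gc : {within unit_I R, continuous g}.

Lemma HH_cont : continuous HH.
Proof.
have cd : continuous dd.
  apply: cmin; first exact: cfst.
  apply: cadd; [exact: ccst| apply: cneg; exact: cfst].
have cz : continuous zz.
  apply: cadd; first exact: ccst.
  apply: cmul; first by apply: cadd; [exact: cfst| exact: ccst].
  apply: cadd; first exact: ccst.
  apply: cmul; first exact: ccst.
  apply: cmin; [exact: csnd| exact: ccst].
have c3 : continuous (fun p => 1 - 3 * dd p).
  apply: cadd; first exact: ccst; apply: cneg; apply: cmul; [exact: ccst| exact: cd].
have c2 : continuous (fun p : R * R => 1 - 2 * p.2).
  apply: cadd; first exact: ccst; apply: cneg; apply: cmul; [exact: ccst| exact: csnd].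
have cl : continuous lam by apply: cmax => //; apply: cabs.
have cm : continuous mu by apply: cmax; [apply: cmax| exact: ccst].
have cG : continuous (fun p => G (zz p)) by apply: ccomp => //; exact: G_cont.
have cG1 : continuous (fun p => (G (zz p)).1) by apply: (ccomp cG); exact: cfst.
have cG2 : continuous (fun p => (G (zz p)).2) by apply: (ccomp cG); exact: csnd.
apply: cpair; apply: cadd; apply: cmul; try exact: ccst; try apply: cexp => //;
  apply: cadd => //; exact: ccst.
Qed.

Hypothesis g01 : g 0 = g 1.
Hypothesis gS : forall t, unit_I R t -> S (g t).

Lemma dd_cases t s : (dd (t, s) = t /\ t <= 1 - t) \/ (dd (t, s) = 1 - t /\ 1 - t <= t).
Proof.
rewrite /dd; case: (leP t (1 - t)) => h.
  by left.
by right; split => //; apply: ltW.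
Qed.

Lemma Gx0 p : zz p <= 0 \/ 1 <= zz p -> G (zz p) = x0.
Proof.
by case=> h; rewrite /G /=; [rewrite clamp_le0 | rewrite clamp_ge1 // -g01].
Qed.

Lemma HHx0 p : G (zz p) = x0 -> HH p = (lam p ^+ 3 * x0.1, lam p ^+ 4 * x0.2).
Proof. by move=> e; rewrite /HH e !subrr !mulr0 !add0r. Qed.

Lemma lam_bounds t s : 0 <= t <= 1 -> 0 <= s <= 1 -> 0 <= lam (t, s) <= 1.
Proof.
move=> /andP[t0 t1] /andP[s0 s1]; rewrite /lam /=.
apply/andP; split; first by rewrite le_max normr_ge0 orbT.
rewrite ge_max; apply/andP; split.
  case: (dd_cases t s) => -[-> _]; lra.
rewrite ler_norml; apply/andP; split; lra.
Qed.

Lemma x0S : S x0.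
Proof. apply: gS; apply/unit_IP; lra. Qed.

Lemma HH_in p : unit_I R p.1 -> unit_I R p.2 -> S (HH p).
Proof.
case: p => t s /= /unit_IP ht /unit_IP hs.
have [l0 l1] : 0 <= lam (t, s) /\ lam (t, s) <= 1 by apply/andP; exact: lam_bounds.
have Sx0 : S (lam (t, s) ^+ 3 * x0.1, lam (t, s) ^+ 4 * x0.2) by apply: SPhi => //; exact: x0S.
case: (leP (zz (t, s)) 0) => hz0.
  by rewrite HHx0 // Gx0 //; left.
case: (leP 1 (zz (t, s))) => hz1.
  by rewrite HHx0 // Gx0 //; right.
move: ht hs => /andP[t0 t1] /andP[s0 s1].
case: (leP s (1/2)) => hs2.
- have em : mu (t, s) = lam (t, s).
    rewrite /mu /lam /= (@ger0_norm _ (1 - 2 * s)); last lra.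
    apply: max_l; rewrite le_max; apply/orP; right; lra.
  have -> : HH (t, s) = (lam (t, s) ^+ 3 * (G (zz (t, s))).1, lam (t, s) ^+ 4 * (G (zz (t, s))).2).
    rewrite /HH em; congr (_, _); ring.
  apply: SPhi => //; exact: gS (clamp_in _).
- have ez : zz (t, s) = 1/2 + (t - 1/2) * 3.
    rewrite /zz /= min_r; last exact: ltW.
    lra.
  rewrite ez in hz0 hz1.
  have em : mu (t, s) = 0.
    rewrite /mu /=; apply: max_r; rewrite ge_max; apply/andP; split; last lra.
    case: (dd_cases t s) => -[-> _]; lra.
  by rewrite /HH em !expr0n /= !mul0r !add0r.
Qed.


Lemma HH_bot t : unit_I R t -> HH (t, 0) = g t.
Proof.
move=> /unit_IP /andP[t0 t1].
have ez : zz (t, 0) = t.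
  rewrite /zz /= min_l; last lra.
  lra.
have el : lam (t, 0) = 1.
  rewrite /lam /= mulr0 subr0 normr1; apply: max_r.
  case: (dd_cases t 0) => -[-> _]; lra.
have em : mu (t, 0) = 1.
  rewrite /mu /= mulr0 subr0 (@max_r _ _ _ 1); last by case: (dd_cases t 0) => -[-> _]; lra.
  by apply: max_l; exact: ler01.
rewrite /HH ez el em !expr1n !mul1r !subrK /G /= clamp_id //.
by case: (g t).
Qed.

Lemma HH_top t : unit_I R t -> HH (t, 1) = x0.
Proof.
move=> /unit_IP /andP[t0 t1].
have el : lam (t, 1) = 1.
  rewrite /lam /=.
  have -> : (1 - 2 * 1 : R) = -1 by lra.
  rewrite normrN normr1; apply: max_r.
  case: (dd_cases t 1) => -[-> _]; lra.
have ex0 : x0 = (lam (t, 1) ^+ 3 * x0.1, lam (t, 1) ^+ 4 * x0.2).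
  by rewrite el !expr1n !mul1r; case: x0.
case: (leP (zz (t, 1)) 0) => hz0.
  by rewrite HHx0 // Gx0 //; left.
case: (leP 1 (zz (t, 1))) => hz1.
  by rewrite HHx0 // Gx0 //; right.
have ez : zz (t, 1) = 1/2 + (t - 1/2) * 3.
  rewrite /zz /= min_r; last lra.
  lra.
rewrite ez in hz0 hz1.
have em : mu (t, 1) = 0.
  rewrite /mu /=; apply: max_r; rewrite ge_max; apply/andP; split; last lra.
  case: (dd_cases t 1) => -[-> _]; lra.
by rewrite [RHS]ex0 /HH em !expr0n /= !mul0r !add0r.
Qed.

Lemma HH_side s : unit_I R s -> HH (0, s) = x0 /\ HH (1, s) = x0.
Proof.
move=> /unit_IP /andP[s0 s1].
have hm : 0 <= Num.min s (1/2) by rewrite le_min s0 /=; lra.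
have el t : t = 0 \/ t = 1 -> lam (t, s) = 1.
  move=> ht; rewrite /lam /=.
  have -> : dd (t, s) = 0 by rewrite /dd /=; case: ht => ->; [rewrite subr0 min_l // | rewrite subrr min_r //].
  rewrite mulr0 subr0; apply: max_l; rewrite ler_norml; apply/andP; split; lra.
have ex0 t : t = 0 \/ t = 1 -> x0 = (lam (t, s) ^+ 3 * x0.1, lam (t, s) ^+ 4 * x0.2).
  by move=> ht; rewrite el // !expr1n !mul1r; case: x0.
split.
- rewrite [RHS](ex0 0); last by left.
  apply: HHx0; apply: Gx0; left; rewrite /zz /=; nra.
- rewrite [RHS](ex0 1); last by right.
  apply: HHx0; apply: Gx0; right; rewrite /zz /=; nra.
Qed.

End Hom.

Lemma sc : simply_connected S.
Proof.
split.
- by exists (0, 0).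
- move=> x y Sx Sy; exists (pth x y); split; [split| exact: pth0| exact: pth1].
    apply: continuous_subspaceT; exact: pth_cont.
  by move=> t; exact: pth_in.
- move=> g [gc gS] g01; exists (HH g); split.
  + apply: continuous_subspaceT; exact: HH_cont.
  + by move=> [t s] [/= ht hs]; apply: HH_in.
  + by move=> t; apply: HH_bot.
  + by move=> t; apply: HH_top.
  + by move=> s; apply: HH_side.
Qed.

End Topo.

Theorem lemma1p3 (R : realType) : simply_connected (limit_set R).
Proof.
apply: sc; first exact: S_origin.
by move=> a p a0 a1 Sp; apply: SPhi.
Qed.
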